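(* Let $\beta\ge1$ and let $x,y\in\mathbb R^d\setminus\{0\}$. For $\gamma>0$ define $$\cos_{(\beta,\gamma)}(x,y)=\Big\langle\Big(\frac{x}{\|x\|_{\beta+\gamma}}\Big)^{\ominus\beta},\Big(\frac{y}{\|y\|_{\beta+\gamma}}\Big)^{\ominus\gamma}\Big\rangle .$$ Then (a) $\displaystyle\lim_{\gamma\to0}\cos_{(\beta,\gamma)}(x,y)=\Big\langle\Big(\frac{x}{\|x\|_\beta}\Big)^{\ominus\beta},\mathrm{sign}(y)\Big\rangle$, where $\mathrm{sign}(y)=(\mathrm{sign}(y_i))_{i=1}^d$; (b) $\displaystyle\lim_{\gamma\to\infty}\cos_{(\beta,\gamma)}(x,y)=\Big\langle\Big(\frac{x}{\|x\|_\infty}\Big)^{\ominus\beta},\frac{\mathrm{sign}_\infty(y)}{\|\mathrm{sign}_\infty(y)\|_1}\Big\rangle$, where the $i$-th component of $\mathrm{sign}_\infty(y)$ is $\mathrm{sign}(y_i)\,\mathbb I(|y_i|=\|y\|_\infty)$.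
   Context: $\langle\cdot,\cdot\rangle$ is the Euclidean inner product on $\mathbb R^d$; $\|x\|_r=(\sum_i|x_i|^r)^{1/r}$ and $\|x\|_\infty=\max_i|x_i|$. For a vector $v$ and $a>0$, $v^{\ominus a}$ is taken componentwise with $t^{\ominus a}=\mathrm{sign}(t)|t|^a$ and $\mathrm{sign}(0)=0$; $\mathbb I$ is the indicator function. *)

(* Defs.v *)
From HB Require Import structures.
From mathcomp Require Import all_boot all_order all_algebra.
From mathcomp Require Import all_classical all_reals all_analysis.
Set Implicit Arguments. Unset Strict Implicit. Unset Printing Implicit Defensive.
Import Order.TTheory GRing.Theory Num.Theory.
Import numFieldNormedType.Exports.
Local Open Scope ring_scope.

(* vectors of R^d are row vectors 'rV[R]_d, coordinate i is v ord0 i *)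

Definition spow (R : realType) (a t : R) : R := Num.sg t * (`|t| `^ a).

Definition vspow (R : realType) (d : nat) (a : R) (v : 'rV[R]_d) : 'rV[R]_d :=
  \row_i spow a (v ord0 i).

Definition lpnorm (R : realType) (d : nat) (r : R) (v : 'rV[R]_d) : R :=
  (\sum_i `|v ord0 i| `^ r) `^ r^-1.

Definition linfnorm (R : realType) (d : nat) (v : 'rV[R]_d) : R :=
  \big[Num.max/0]_i `|v ord0 i|.

Definition inner (R : realType) (d : nat) (u v : 'rV[R]_d) : R :=
  \sum_i u ord0 i * v ord0 i.

Definition vsign (R : realType) (d : nat) (v : 'rV[R]_d) : 'rV[R]_d :=
  \row_i Num.sg (v ord0 i).

Definition vsign_inf (R : realType) (d : nat) (v : 'rV[R]_d) : 'rV[R]_d :=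
  \row_i (Num.sg (v ord0 i) * (`|v ord0 i| == linfnorm v)%:R).

Definition cosbg (R : realType) (d : nat) (beta gamma : R) (x y : 'rV[R]_d) : R :=
  inner (vspow beta ((lpnorm (beta + gamma) x)^-1 *: x))
        (vspow gamma ((lpnorm (beta + gamma) y)^-1 *: y)).

(* Main.v *)
Require Import Defs.
From HB Require Import structures.
From mathcomp Require Import all_boot all_order all_algebra.
From mathcomp Require Import all_classical all_reals all_analysis.
From mathcomp Require Import ring lra.
Set Implicit Arguments. Unset Strict Implicit. Unset Printing Implicit Defensive.
Import Order.TTheory GRing.Theory Num.Theory.
Import numFieldNormedType.Exports.
Local Open Scope classical_set_scope.
Local Open Scope ring_scope.

Section L.
Variable R : realType.
Context {T : Type} {F : set_system T} {FF : ProperFilter F}.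

Lemma cvg_powRr (f : T -> R) l a : 0 < a -> f @ F --> l ->
  (fun t => a `^ f t) @ F --> a `^ l.
Proof.
move=> a0 fl; rewrite /powR gt_eqF //.
have h : (fun t => f t * ln a) @ F --> l * ln a.
  by apply: cvgM => //; exact: cvg_cst.
exact: (continuous_cvg _ (@continuous_expR R _) h).
Qed.

Lemma cvg_powR0r (f : T -> R) l : l != 0 -> (\forall t \near F, 0 < f t) ->
  (fun t => 0 `^ f t) @ F --> (0:R) `^ l.
Proof.
move=> l0 fp; rewrite powR0 //; apply: cvg_near_cst.
by apply: filterS fp => t ft; rewrite powR0 // gt_eqF.
Qed.

Lemma cvg_powR_oo (f : T -> R) a : 0 <= a <= 1 -> f @ F --> +oo ->
  (fun t => a `^ f t) @ F --> ((a == 1)%:R : R).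
Proof.
move=> /andP[a0 a1] foo.
have [->|a_ne1] := eqVneq a 1.
  rewrite powR1; exact: cvg_cst.
have a_lt1 : a < 1 by rewrite lt_neqAle a_ne1.
have [a_eq0|a_gt0] := eqVneq a 0.
  rewrite a_eq0; apply: cvg_near_cst.
  move/cvgryPgt: foo => /(_ 0).
  by apply: filterS => t ft; rewrite powR0 // gt_eqF.
have apos : 0 < a by rewrite lt_neqAle eq_sym a_gt0.
have c0 : 0 < - ln a by rewrite oppr_gt0 ln_lt0 // apos.
have -> : (fun t => a `^ f t) = (fun x => expR (- x)) \o (fun t => f t * (- ln a)).
  by apply/funext => t /=; rewrite /powR gt_eqF // mulrN opprK.
apply: cvg_comp; last exact: cvgr_expR.
apply/cvgryPge => A; move/cvgryPge: foo => /(_ (A / (- ln a))).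
by apply: filterS => t; rewrite ler_pdivrMr.
Qed.

Lemma cvg_sumR (I : finType) (g : I -> T -> R) (l : I -> R) :
  (forall i, g i @ F --> l i) ->
  (fun t => \sum_i g i t) @ F --> \sum_i l i.
Proof.
move=> H; apply: cvg_big; first exact: add_continuous.
by move=> i _; exact: H.
Qed.
End L.

Section S.
Variable R : realType.
Variable d : nat.
Implicit Types v : 'rV[R]_d.

Definition aa v i : R := `|v ord0 i| / linfnorm v.
Definition SS v (r : R) : R := \sum_i aa v i `^ r.
Definition KK v : R := \sum_i (aa v i == 1)%:R.

Lemma linf_ge v i : `|v ord0 i| <= linfnorm v.
Proof. rewrite /linfnorm; exact: le_bigmax. Qed.

Lemma linf_arg v : v != 0 -> exists j, linfnorm v = `|v ord0 j| /\ v ord0 j != 0.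
Proof.
move=> v0.
have [j vj] : exists j, v ord0 j != 0.
  apply/existsP; apply: contraR v0 => /existsPn H; apply/eqP/rowP => k.
  by rewrite mxE; move/negPn/eqP: (H k).
rewrite /linfnorm (bigmax_eq_arg _ j) //.
set i := [arg max_(_ > j) _]%O.
exists i; split => //.
apply: contraTneq (linf_ge v j) => vi0; rewrite /linfnorm (bigmax_eq_arg _ j) //.
by rewrite -/i vi0 normr0 -ltNge normr_gt0.
Qed.
Arguments linf_arg {v}.

Lemma linf_gt0 v : v != 0 -> 0 < linfnorm v.
Proof. by move=> /linf_arg [j [-> ?]]; rewrite normr_gt0. Qed.

Arguments linf_gt0 {v}.
Lemma linf_ge0 v : 0 <= linfnorm v.
Proof. rewrite /linfnorm; elim/big_ind: _ => //= a b a0 b0; rewrite le_max a0 //. Qed.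

Lemma aa_ge0 v i : 0 <= aa v i.
Proof. by rewrite /aa divr_ge0 // linf_ge0. Qed.

Lemma aa_le1 v i : v != 0 -> aa v i <= 1.
Proof. by move=> v0; rewrite /aa ler_pdivrMr ?linf_gt0 // mul1r linf_ge. Qed.

Lemma aa_arg v : v != 0 -> exists j, aa v j = 1.
Proof. by move=> v0; have [j [e _]] := linf_arg v0; exists j; rewrite /aa -e divff // gt_eqF // linf_gt0. Qed.

Arguments aa_arg {v}.
Lemma aa_eq1 v i : v != 0 -> (aa v i == 1) = (`|v ord0 i| == linfnorm v).
Proof.
move=> v0; rewrite /aa; apply/eqP/eqP => [e|->]; last by rewrite divff // gt_eqF // linf_gt0.
by rewrite -[RHS]mul1r -e divfK // gt_eqF // linf_gt0.
Qed.

Lemma aa_eq0 v i : (aa v i == 0) = (v ord0 i == 0) || (linfnorm v == 0).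
Proof. by rewrite /aa mulf_eq0 normr_eq0 invr_eq0. Qed.

Lemma SS_ge1 v r : v != 0 -> 0 < r -> 1 <= SS v r.
Proof.
move=> v0 r0; have [j aj] := aa_arg v0.
rewrite /SS (bigD1 j) //= aj powR1 lerDl; apply: sumr_ge0 => i _; exact: powR_ge0.
Qed.

Arguments SS_ge1 {v r}.
Lemma KK_ge1 v : v != 0 -> 1 <= KK v.
Proof.
move=> v0; have [j aj] := aa_arg v0.
rewrite /KK (bigD1 j) //= aj eqxx lerDl; apply: sumr_ge0 => i _; exact: ler0n.
Qed.

Lemma lpnormE v r : v != 0 -> 0 < r -> lpnorm r v = linfnorm v * (SS v r) `^ r^-1.
Proof.
move=> v0 r0; have M0 := linf_gt0 v0.
rewrite /lpnorm /SS.
have -> : \sum_i `|v ord0 i| `^ r = linfnorm v `^ r * \sum_i aa v i `^ r.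
  rewrite mulr_sumr; apply: eq_bigr => i _.
  rewrite -powRM ?aa_ge0 ?(ltW M0) //.
  by rewrite /aa [linfnorm v * _]mulrC divfK // gt_eqF.
rewrite powRM ?powR_ge0 ?sumr_ge0 // -?powRrM ?divff ?gt_eqF // ?powRr1 // ?(ltW M0) //.
by move=> i _; exact: powR_ge0.
Qed.
Arguments lpnormE {v r}.

Lemma spowE v a r i : v != 0 -> 0 < a -> 0 < r ->
  spow a ((lpnorm r v)^-1 * v ord0 i) =
  Num.sg (v ord0 i) * (aa v i `^ a * expR (- (a / r * ln (SS v r)))).
Proof.
move=> v0 a0 r0; have M0 := linf_gt0 v0; have S1 := SS_ge1 v0 r0.
have S0 : 0 < SS v r by apply: lt_le_trans S1.
have T0 : 0 < SS v r `^ r^-1 by apply: powR_gt0.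
rewrite lpnormE // /spow sgrM gtr0_sg ?invr_gt0 ?mulr_gt0 // mul1r; congr (_ * _).
rewrite normrM gtr0_norm ?invr_gt0 ?mulr_gt0 // invfM.
have -> : (linfnorm v)^-1 / SS v r `^ r^-1 * `|v ord0 i| = aa v i * (SS v r `^ r^-1)^-1.
  by rewrite /aa; ring.
rewrite powRM ?aa_ge0 ?invr_ge0 ?(ltW T0) //; congr (_ * _).
rewrite -powRN -powRrM /powR gt_eqF //; congr expR.
by ring.
Qed.
End S.

Section M.
Variable R : realType.
Variable d : nat.
Context {T : Type} {F : set_system T} {FF : ProperFilter F}.
Implicit Types v : 'rV[R]_d.

Lemma cvg_SS v (r : T -> R) l : v != 0 -> r @ F --> l -> 0 < l ->
  (\forall t \near F, 0 < r t) -> (fun t => SS v (r t)) @ F --> SS v l.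
Proof.
move=> v0 rl l0 rp; rewrite /SS; apply: (@cvg_sumR R T F FF) => i.
have [a0|apos] := eqVneq (aa v i) 0.
  by rewrite a0; apply: cvg_powR0r => //; rewrite gt_eqF.
by apply: cvg_powRr rl; rewrite lt_neqAle eq_sym apos aa_ge0.
Qed.

Lemma cvg_SS_oo v (r : T -> R) : v != 0 -> r @ F --> +oo ->
  (fun t => SS v (r t)) @ F --> KK v.
Proof.
move=> v0 roo; rewrite /SS /KK; apply: (@cvg_sumR R T F FF) => i.
by apply: cvg_powR_oo => //; rewrite aa_ge0 aa_le1.
Qed.

Lemma cvg_E v (a r : T -> R) (la l : R) : v != 0 -> a @ F --> la -> r @ F --> l -> 0 < l ->
  (\forall t \near F, 0 < r t) ->
  (fun t => expR (- (a t / r t * ln (SS v (r t))))) @ F --> expR (- (la / l * ln (SS v l))).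
Proof.
move=> v0 al rl l0 rp.
apply: (continuous_cvg _ (@continuous_expR R _)).
apply: cvgN; apply: cvgM; first by apply: cvgM => //; apply: cvgV rl; rewrite gt_eqF.
apply: (continuous_cvg _ (continuous_ln _)).
  by apply: lt_le_trans (SS_ge1 v0 l0).
exact: cvg_SS.
Qed.

Lemma cvg_E_oo v (a r : T -> R) (la : R) : v != 0 -> (fun t => a t / r t) @ F --> la ->
  r @ F --> +oo ->
  (fun t => expR (- (a t / r t * ln (SS v (r t))))) @ F --> expR (- (la * ln (KK v))).
Proof.
move=> v0 al roo.
apply: (continuous_cvg _ (@continuous_expR R _)).
apply: cvgN; apply: cvgM => //.
apply: (continuous_cvg _ (continuous_ln _)).
  by apply: lt_le_trans (KK_ge1 v0).
exact: cvg_SS_oo.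
Qed.
End M.

Lemma spow_inf (R : realType) (d : nat) (v : 'rV[R]_d) b i : v != 0 ->
  spow b ((linfnorm v)^-1 * v ord0 i) = Num.sg (v ord0 i) * aa v i `^ b.
Proof.
move=> v0; have M0 := linf_gt0 v0.
rewrite /spow sgrM gtr0_sg ?invr_gt0 // mul1r normrM gtr0_norm ?invr_gt0 //.
by rewrite /aa [_^-1 * _]mulrC.
Qed.

Lemma lpnorm1_sinf (R : realType) (d : nat) (v : 'rV[R]_d) : v != 0 ->
  lpnorm 1 (vsign_inf v) = KK v.
Proof.
move=> v0; rewrite /lpnorm invr1 powRr1; last by apply: sumr_ge0 => i _; exact: powR_ge0.
rewrite /KK; apply: eq_bigr => i _; rewrite powRr1 // mxE -aa_eq1 //.
have [e|] := eqVneq (aa v i) 1; last by rewrite mulr0 normr0.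
rewrite mulr1 normr_sg; suff -> : v ord0 i != 0 by [].
apply/eqP => vi0.
by move: e; rewrite /aa vi0 normr0 mul0r => /eqP; rewrite eq_sym oner_eq0.
Qed.

Theorem mainTheorem12 (R : realType) (d : nat) (beta : R) (x y : 'rV[R]_d) :
  1 <= beta -> x != 0 -> y != 0 ->
  ((fun gamma => cosbg beta gamma x y) @ (0:R)^'+ -->
     inner (vspow beta ((lpnorm beta x)^-1 *: x)) (vsign y))
  /\
  ((fun gamma => cosbg beta gamma x y) @ +oo%R -->
     inner (vspow beta ((linfnorm x)^-1 *: x))
           ((lpnorm 1 (vsign_inf y))^-1 *: vsign_inf y)).
Proof.
move=> b1 x0 y0; have b0 : 0 < beta by apply: lt_le_trans b1.
pose Ef (v : 'rV[R]_d) (a r : R) := expR (- (a / r * ln (SS v r))).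
pose form g := \sum_i (Num.sg (x ord0 i) * (aa x i `^ beta * Ef x beta (beta + g))) *
   (Num.sg (y ord0 i) * (aa y i `^ g * Ef y g (beta + g))).
have formE g : 0 < g -> cosbg beta g x y = form g.
  move=> g0; rewrite /cosbg /inner; apply: eq_bigr => i _.
  by rewrite !mxE !spowE // addr_gt0.
split.
- have -> : inner (vspow beta ((lpnorm beta x)^-1 *: x)) (vsign y) =
     \sum_i (Num.sg (x ord0 i) * (aa x i `^ beta * Ef x beta beta)) * Num.sg (y ord0 i).
    by rewrite /inner; apply: eq_bigr => i _; rewrite !mxE spowE.
  have near_pos : \forall g \near (0:R)^'+, 0 < g by exact: nbhs_right_gt.
  have H : \forall g \near (0:R)^'+, form g = cosbg beta (g : R) x y.
    by apply: filterS near_pos => g g0; rewrite formE.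
  apply: cvg_trans (near_eq_cvg H) _.
  have gid : (fun g : R => g) @ (0:R)^'+ --> (0:R).
    by apply: cvg_at_right_filter; exact: cvg_id.
  have rb : (fun g : R => beta + g) @ (0:R)^'+ --> beta.
    by rewrite -[X in _ --> X]addr0; apply: cvgD => //; exact: cvg_cst.
  have rpos : \forall g \near (0:R)^'+, 0 < beta + (g : R).
    by apply: filterS near_pos => g g0; rewrite addr_gt0.
  apply: cvg_sumR => i; apply: cvgM.
    apply: cvgM; first exact: cvg_cst.
    apply: cvgM; first exact: cvg_cst.
    apply: (cvg_E (a := fun=> beta)) => //; exact: cvg_cst.
  have [yi0|yi0] := eqVneq (y ord0 i) 0.
    rewrite yi0 sgr0; apply: cvg_near_cst; apply: nearW => g; by rewrite mul0r.
  have ay0 : 0 < aa y i.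
    by rewrite lt_neqAle aa_ge0 andbT eq_sym aa_eq0 negb_or yi0 gt_eqF // linf_gt0.
  have : (fun g => Num.sg (y ord0 i) * (aa y i `^ g * Ef y g (beta + g))) @ (0:R)^'+ -->
      Num.sg (y ord0 i) * (aa y i `^ 0 * Ef y 0 beta).
    apply: cvgM; first exact: cvg_cst.
    apply: cvgM; first exact: cvg_powRr.
    exact: cvg_E.
  by rewrite powRr0 /Ef mul0r mul0r oppr0 expR0 !mulr1.
- have -> : inner (vspow beta ((linfnorm x)^-1 *: x))
           ((lpnorm 1 (vsign_inf y))^-1 *: vsign_inf y) =
     \sum_i (Num.sg (x ord0 i) * (aa x i `^ beta * 1)) *
        (Num.sg (y ord0 i) * ((aa y i == 1)%:R * (KK y)^-1)).
    rewrite /inner lpnorm1_sinf //; apply: eq_bigr => i _.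
    rewrite !mxE spow_inf // -aa_eq1 // mulr1; ring.
  have near_pos : \forall g \near +oo%R, 0 < (g : R).
    by apply: nbhs_pinfty_gt; exact: num_real.
  have H : \forall g \near +oo%R, form g = cosbg beta (g : R) x y.
    by apply: filterS near_pos => g g0; rewrite formE.
  apply: cvg_trans (near_eq_cvg H) _.
  have rpos : \forall g \near +oo%R, 0 < beta + (g : R).
    by apply: filterS near_pos => g g0; rewrite addr_gt0.
  have roo : (fun g : R => beta + g) @ +oo%R --> +oo%R.
    apply/cvgryPge => A; apply: filterS (nbhs_pinfty_ge (r := A - beta) _) => [g hg|].
      lra.
    exact: num_real.
  have inv0 : (fun g : R => (beta + g)^-1) @ +oo%R --> 0.
    exact: (gtr0_cvgV0 rpos).2 roo.
  have ratx : (fun g : R => beta / (beta + g)) @ +oo%R --> 0.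
    rewrite -(mulr0 beta); apply: cvgM => //; exact: cvg_cst.
  have raty : (fun g : R => g / (beta + g)) @ +oo%R --> (1:R).
    have H2 : \forall g \near +oo%R, 1 - beta / (beta + g) = (g : R) / (beta + g).
      apply: filterS rpos => g g0; field; by rewrite gt_eqF.
    have h : (fun g : R => 1 - beta / (beta + g)) @ +oo%R --> (1 - 0 : R).
      by apply: cvgB => //; exact: cvg_cst.
    rewrite subr0 in h; exact: cvg_trans (near_eq_cvg H2) h.
  apply: cvg_sumR => i; apply: cvgM.
    apply: cvgM; first exact: cvg_cst.
    apply: cvgM; first exact: cvg_cst.
    have : (fun g => Ef x beta (beta + g)) @ +oo%R --> expR (- (0 * ln (KK x))).
      by apply: (cvg_E_oo (a := fun=> beta)).
    by rewrite mul0r oppr0 expR0.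
  apply: cvgM; first exact: cvg_cst.
  apply: cvgM.
    apply: cvg_powR_oo; first by rewrite aa_ge0 aa_le1.
    exact: cvg_id.
  have : (fun g => Ef y g (beta + g)) @ +oo%R --> expR (- (1 * ln (KK y))).
    by apply: (cvg_E_oo (a := fun g => g)).
  rewrite mul1r expRN lnK // posrE; apply: lt_le_trans (KK_ge1 y0); exact: ltr01.
Qed.
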